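(* Let $n\ge 1$, $N\ge 2$ even, $m>0$, and let $D_m=-\mathrm{i}\sum_{j=1}^n\alpha^j\partial_{x^j}+m\beta$ be a Dirac operator on $\mathbb{R}^n$ with $N\times N$ self-adjoint, mutually anticommuting matrices $\alpha^1,\dots,\alpha^n,\beta$ satisfying $(\alpha^j)^2=\beta^2=1_N$. Let $\bm{K}:\mathbb{C}^N\to\mathbb{C}^N$ denote complex conjugation, and let $B\in\mathrm{End}(\mathbb{C}^N)$ satisfy $$\{B\bm{K},D_m\}=0,\qquad B\bm{K}=\bm{K}B^\ast,\qquad B^\ast B=1_N.$$ For $\psi\in L^2(\mathbb{R}^n,\mathbb{C}^N)$ define $$Q(\psi)=\int_{\mathbb{R}^n}\psi(x)^\ast\psi(x)\,dx,\qquad \Lambda(\psi)=\int_{\mathbb{R}^n}\psi(x)^\ast B\bm{K}\psi(x)\,dx.$$ Let $a,b\in\mathbb{C}$ with $|a|^2-|b|^2=1$, and set $g=a+bB\bm{K}$ (acting pointwise, $g\psi=a\psi+bB\overline{\psi}$). Then for every $\psi\in L^2(\mathbb{R}^n,\mathbb{C}^N)$, $$Q(g\psi)=(|a|^2+|b|^2)Q(\psi)+2\,\mathrm{Re}\{\bar a b\,\Lambda(\psi)\},$$ $$\Lambda(g\psi)=\bar a^2\Lambda(\psi)+2\bar a\bar b\,Q(\psi)+\bar b^2\,\overline{\Lambda(\psi)},$$ and consequently $$Q(g\psi)^2-|\Lambda(g\psi)|^2=Q(\psi)^2-|\Lambda(\psi)|^2.$$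
   Context: $\{X,Y\}=XY+YX$ denotes the anticommutator; $\psi^\ast$ is the hermitian conjugate. The set of operators $a+bB\bm{K}$ with $|a|^2-|b|^2=1$ is called the Bogoliubov group. *)

(* Defs.v *)
From HB Require Import structures.
From mathcomp Require Import all_boot all_order all_algebra.
From mathcomp Require Import all_classical all_reals all_analysis.
From mathcomp Require Import complex.
Import numFieldNormedType.Exports.

Set Implicit Arguments.
Unset Strict Implicit.
Unset Printing Implicit Defensive.

Import Order.TTheory GRing.Theory Num.Theory.
Local Open Scope ring_scope.
Local Open Scope classical_set_scope.

Section DiracDefs.
Variable R : realType.
Local Notation C := (R[i]).

Definition hadj (p q : nat) (M : 'M[C]_(p, q)) : 'M[C]_(q, p) :=
  (map_mx conjc M)^T.

Definition cconj (p q : nat) (M : 'M[C]_(p, q)) : 'M[C]_(p, q) :=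
  map_mx conjc M.

Definition box (n : nat) (a b : 'rV[R]_n) : set 'rV[R]_n :=
  [set x | forall i : 'I_n, a 0 i < x 0 i <= b 0 i].

Definition boxes (n : nat) : set (set 'rV[R]_n) :=
  [set box a b | a in [set: 'rV[R]_n] & b in [set: 'rV[R]_n]].

(* R^n with its Borel sigma-algebra (generated by the boxes) *)
Definition Rn (n : nat) := g_sigma_algebraType (@boxes n).

(* mu is Lebesgue measure on R^n: it gives every box its volume
   (this determines mu uniquely on the Borel sigma-algebra) *)
Definition is_lebesgue_Rn (n : nat) (mu : {measure set (Rn n) -> \bar R}) :=
  forall a b : 'rV[R]_n, (forall i, a 0 i <= b 0 i) ->
    mu (box a b) = ((\prod_(i < n) (b 0 i - a 0 i))%:E)%E.

Definition nsq (N : nat) (v : 'cV[C]_N) : R :=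
  \sum_(k < N) (complex.Re (v k 0) ^+ 2 + complex.Im (v k 0) ^+ 2).

Definition L2 (n N : nat) (mu : {measure set (Rn n) -> \bar R})
    (psi : 'rV[R]_n -> 'cV[C]_N) : Prop :=
  (forall k : 'I_N, measurable_fun (setT : set (Rn n))
        (fun x : Rn n => complex.Re (psi x k 0)) /\
      measurable_fun (setT : set (Rn n))
        (fun x : Rn n => complex.Im (psi x k 0))) /\
  (\int[mu]_(x in (setT : set (Rn n))) (nsq (psi x))%:E < +oo)%E.

Definition cint (n : nat) (mu : {measure set (Rn n) -> \bar R})
    (f : 'rV[R]_n -> C) : C :=
  Complex (Rintegral mu (setT : set (Rn n)) (fun x : Rn n => complex.Re (f x)))
          (Rintegral mu (setT : set (Rn n)) (fun x : Rn n => complex.Im (f x))).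

Definition Qf (n N : nat) (mu : {measure set (Rn n) -> \bar R})
    (psi : 'rV[R]_n -> 'cV[C]_N) : C :=
  cint mu (fun x => (hadj (psi x) *m psi x) 0 0).

Definition Lambdaf (n N : nat) (mu : {measure set (Rn n) -> \bar R})
    (B : 'M[C]_N) (psi : 'rV[R]_n -> 'cV[C]_N) : C :=
  cint mu (fun x => (hadj (psi x) *m (B *m cconj (psi x))) 0 0).

Definition BKop (n N : nat) (B : 'M[C]_N) (psi : 'rV[R]_n -> 'cV[C]_N) :
  'rV[R]_n -> 'cV[C]_N := fun x => B *m cconj (psi x).

Definition gop (n N : nat) (a b : C) (B : 'M[C]_N)
    (psi : 'rV[R]_n -> 'cV[C]_N) : 'rV[R]_n -> 'cV[C]_N :=
  fun x => a *: psi x + b *: (B *m cconj (psi x)).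

Definition evec (n : nat) (j : 'I_n) : 'rV[R]_n := delta_mx 0 j.

Definition cdiff (n N : nat) (psi : 'rV[R]_n -> 'cV[C]_N) : Prop :=
  forall (k : 'I_N) (x : 'rV[R]_n),
    differentiable (fun y : 'rV[R]_n => complex.Re (psi y k 0)) x /\
    differentiable (fun y : 'rV[R]_n => complex.Im (psi y k 0)) x.

Definition pderiv (n N : nat) (psi : 'rV[R]_n -> 'cV[C]_N) (j : 'I_n)
    (x : 'rV[R]_n) : 'cV[C]_N :=
  \col_k Complex ('D_(evec j) (fun y : 'rV[R]_n => complex.Re (psi y k 0)) x)
                 ('D_(evec j) (fun y : 'rV[R]_n => complex.Im (psi y k 0)) x).

Definition Dirac (n N : nat) (alpha : 'I_n -> 'M[C]_N) (beta : 'M[C]_N) (m : R)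
    (psi : 'rV[R]_n -> 'cV[C]_N) : 'rV[R]_n -> 'cV[C]_N :=
  fun x => - (Complex 0 1) *: (\sum_(j < n) alpha j *m pderiv psi j x)
           + (Complex m 0) *: (beta *m psi x).

Definition anticommutes_BK_Dirac (n N : nat) (B : 'M[C]_N)
    (alpha : 'I_n -> 'M[C]_N) (beta : 'M[C]_N) (m : R) : Prop :=
  forall psi : 'rV[R]_n -> 'cV[C]_N, cdiff psi ->
    forall x, BKop B (Dirac alpha beta m psi) x
              + Dirac alpha beta m (BKop B psi) x = 0.

Definition dirac_matrices (n N : nat) (alpha : 'I_n -> 'M[C]_N)
    (beta : 'M[C]_N) : Prop :=
  [/\ forall j, hadj (alpha j) = alpha j,
      hadj beta = beta,
      forall j k, j != k -> alpha j *m alpha k + alpha k *m alpha j = 0,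
      forall j, alpha j *m beta + beta *m alpha j = 0 &
      (forall j, alpha j *m alpha j = 1%:M) /\ beta *m beta = 1%:M].

End DiracDefs.

(* Main.v *)
Require Import Defs.
From HB Require Import structures.
From mathcomp Require Import all_boot all_order all_algebra.
From mathcomp Require Import all_classical all_reals all_analysis.
From mathcomp Require Import complex.
From mathcomp Require Import measurable_realfun.
From mathcomp Require Import ring lra.
Import numFieldNormedType.Exports.
Import Order.TTheory GRing.Theory Num.Theory.
Local Open Scope ring_scope.


Lemma cconjK (R : realType) p q (M : 'M[R[i]]_(p,q)) : cconj (cconj M) = M.
Proof. by apply/matrixP=> i j; rewrite !mxE conjcK. Qed.
Lemma cconjD (R : realType) p q (M P : 'M[R[i]]_(p,q)) : cconj (M + P) = cconj M + cconj P.
Proof. by rewrite /cconj map_mxD. Qed.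
Lemma cconjZ (R : realType) p q c (M : 'M[R[i]]_(p,q)) : cconj (c *: M) = conjc c *: cconj M.
Proof. by apply/matrixP=> i j; rewrite !mxE; exact: rmorphM. Qed.
Lemma cconjM (R : realType) p q r (M : 'M[R[i]]_(p,q)) (P : 'M[R[i]]_(q,r)) :
  cconj (M *m P) = cconj M *m cconj P.
Proof. by rewrite /cconj map_mxM. Qed.
Lemma hadjE (R : realType) p q (M : 'M[R[i]]_(p,q)) : hadj M = (cconj M)^T.
Proof. by []. Qed.
Lemma entry00 (R : realType) (M : 'M[R[i]]_1) : M^T 0 0 = M 0 0.
Proof. by rewrite mxE. Qed.
Lemma centry (R : realType) (M : 'M[R[i]]_1) : (cconj M) 0 0 = conjc (M 0 0).
Proof. by rewrite mxE. Qed.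

Lemma mxDE (K : nmodType) p q (M P : 'M[K]_(p,q)) i j : (M + P) i j = M i j + P i j.
Proof. by rewrite mxE. Qed.
Lemma mxZE (K : pzSemiRingType) p q (c : K) (M : 'M[K]_(p,q)) i j : (c *: M) i j = c * M i j.
Proof. by rewrite mxE. Qed.
Lemma conjcM (R : realType) (x y : R[i]) : conjc (x * y) = conjc x * conjc y.
Proof. exact: rmorphM. Qed.
Lemma cconjT (R : realType) p q (M : 'M[R[i]]_(p,q)) : cconj (M^T) = (cconj M)^T.
Proof. by apply/matrixP=> i j; rewrite !mxE. Qed.
Lemma hadjM (R : realType) p q r (M : 'M[R[i]]_(p,q)) (P : 'M[R[i]]_(q,r)) :
  hadj (M *m P) = hadj P *m hadj M.
Proof. by rewrite !hadjE cconjM trmx_mul. Qed.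
Lemma hadjc (R : realType) p q (M : 'M[R[i]]_(p,q)) : hadj (cconj M) = M^T.
Proof. by rewrite hadjE cconjK. Qed.
Lemma cconj_hadj (R : realType) p q (M : 'M[R[i]]_(p,q)) : cconj (hadj M) = M^T.
Proof. by rewrite hadjE cconjT cconjK. Qed.

Lemma dens_Q (R : realType) N (B : 'M[R[i]]_N) (a b : R[i]) (u v : 'cV[R[i]]_N) q l :
  (forall v : 'cV[R[i]]_N, B *m cconj v = cconj (hadj B *m v)) ->
  hadj B *m B = 1%:M ->
  v = a *: u + b *: (B *m cconj u) ->
  (hadj u *m u) 0 0 = q ->
  (hadj u *m (B *m cconj u)) 0 0 = l ->
  (hadj v *m v) 0 0 = (a * conjc a + b * conjc b) * q + conjc a * b * l
     + conjc (conjc a * b * l)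
  /\ (hadj v *m (B *m cconj v)) 0 0 = conjc a ^+ 2 * l + 2 * conjc a * conjc b * q
     + conjc b ^+ 2 * conjc l.
Proof.
move=> HBK HBB Ev Eq El.
have HB1 : forall w : 'cV[R[i]]_N, cconj B *m w = hadj B *m w.
  by move=> w; rewrite -[RHS]cconjK -HBK cconjM cconjK.
have HB3 : B *m hadj B = 1%:M by apply: mulmx1C.
have T3 : (hadj (B *m cconj u) *m u) 0 0 = conjc l.
  rewrite -El -centry cconjM cconj_hadj cconjM cconjK HB1 hadjM hadjc mulmxA //.
have T4 : (hadj (B *m cconj u) *m (B *m cconj u)) 0 0 = q.
  rewrite hadjM hadjc -mulmxA (mulmxA _ B) HBB mul1mx.
  by rewrite -Eq -entry00 trmx_mul hadjE trmxK.
have hv : hadj v = conjc a *: hadj u + conjc b *: hadj (B *m cconj u).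
  by rewrite Ev !hadjE cconjD !cconjZ linearD /= !linearZ.
have cv : B *m cconj v = conjc a *: (B *m cconj u) + conjc b *: u.
  rewrite Ev cconjD !cconjZ cconjM cconjK HB1 mulmxDr -!scalemxAr mulmxA HB3 mul1mx.
  done.
have gen : forall (X1 X2 X3 X4 : 'M[R[i]]_1) (c1 c2 c3 c4 d1 d2 d3 d4 : R[i]),
  (c1 *: (d1 *: X1) + c2 *: (d2 *: X2) + (c3 *: (d3 *: X3) + c4 *: (d4 *: X4))) 0 0 =
  c1 * (d1 * X1 0 0) + c2 * (d2 * X2 0 0) + (c3 * (d3 * X3 0 0) + c4 * (d4 * X4 0 0)).
  by move=> *; rewrite !mxE.
split.
  rewrite hv Ev mulmxDl !mulmxDr -!scalemxAl -!scalemxAr.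
  rewrite gen.
  rewrite Eq El T3 T4 !conjcM conjcK.
  ring.
rewrite hv cv mulmxDl !mulmxDr -!scalemxAl -!scalemxAr gen.
rewrite Eq El T3 T4; ring.
Qed.


Definition rint (R : realType) n (mu : {measure set (Rn R n) -> \bar R})
  (f : 'rV[R]_n -> R) :=
  mu.-integrable (setT : set (Rn R n)) (fun x : Rn R n => (f x)%:E).
Arguments rint {R n} mu f.

Lemma rintD (R : realType) n (mu : {measure set (Rn R n) -> \bar R}) (f g : 'rV[R]_n -> R) :
  rint mu f -> rint mu g -> rint mu (fun x => f x + g x).
Proof. by move=> hf hg; exact: (integrableD measurableT hf hg). Qed.
Arguments rintD {R n mu f g}.

Lemma rintZ (R : realType) n (mu : {measure set (Rn R n) -> \bar R}) (k : R) (f : 'rV[R]_n -> R) :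
  rint mu f -> rint mu (fun x => k * f x).
Proof. by move=> hf; apply: (integrableZl measurableT k hf). Qed.
Arguments rintZ {R n mu} k {f}.

Lemma rint0 (R : realType) n (mu : {measure set (Rn R n) -> \bar R}) : rint mu (fun _ : 'rV[R]_n => 0).
Proof. exact: (integrable0 mu setT). Qed.

Lemma rint_le (R : realType) n (mu : {measure set (Rn R n) -> \bar R}) (f h : 'rV[R]_n -> R) :
  measurable_fun (setT : set (Rn R n)) (fun x : Rn R n => f x) ->
  (forall x, `|f x| <= h x) -> rint mu h -> rint mu f.
Proof.
move=> mf fh hh; apply: (le_integrable measurableT _ _ hh).
  by apply/measurable_EFinP.
move=> x _ /=; rewrite lee_fin; apply: (le_trans (fh x)).
exact: ler_norm.
Qed.
Arguments rint_le {R n mu f h}.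

Lemma RintD (R : realType) n (mu : {measure set (Rn R n) -> \bar R}) (f g : 'rV[R]_n -> R) : rint mu f -> rint mu g ->
  Rintegral mu (setT : set (Rn R n)) (fun x => f x + g x) =
  Rintegral mu setT (fun x : Rn R n => f x) + Rintegral mu setT (fun x : Rn R n => g x).
Proof. by move=> hf hg; apply: RintegralD. Qed.
Arguments RintD {R n mu f g}.

Lemma RintZ (R : realType) n (mu : {measure set (Rn R n) -> \bar R}) (k : R) (f : 'rV[R]_n -> R) : rint mu f ->
  Rintegral mu (setT : set (Rn R n)) (fun x => k * f x) =
  k * Rintegral mu setT (fun x : Rn R n => f x).
Proof. by move=> hf; apply: RintegralZl. Qed.
Arguments RintZ {R n mu} k {f}.

Lemma Rint6 (R : realType) n (mu : {measure set (Rn R n) -> \bar R}) (f1 f2 f3 f4 f5 f6 : 'rV[R]_n -> R) (k1 k2 k3 k4 k5 k6 : R) :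
  rint mu f1 -> rint mu f2 -> rint mu f3 -> rint mu f4 -> rint mu f5 -> rint mu f6 ->
  Rintegral mu (setT : set (Rn R n))
    (fun x => k1 * f1 x + k2 * f2 x + k3 * f3 x + k4 * f4 x + k5 * f5 x + k6 * f6 x) =
  k1 * Rintegral mu setT (fun x : Rn R n => f1 x)
  + k2 * Rintegral mu setT (fun x : Rn R n => f2 x)
  + k3 * Rintegral mu setT (fun x : Rn R n => f3 x)
  + k4 * Rintegral mu setT (fun x : Rn R n => f4 x)
  + k5 * Rintegral mu setT (fun x : Rn R n => f5 x)
  + k6 * Rintegral mu setT (fun x : Rn R n => f6 x).
Proof.
move=> h1 h2 h3 h4 h5 h6.
have i1 := rintZ k1 h1; have i2 := rintZ k2 h2; have i3 := rintZ k3 h3.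
have i4 := rintZ k4 h4; have i5 := rintZ k5 h5; have i6 := rintZ k6 h6.
have s2 := rintD i1 i2; have s3 := rintD s2 i3; have s4 := rintD s3 i4.
have s5 := rintD s4 i5.
rewrite (RintD s5 i6) (RintD s4 i5) (RintD s3 i4) (RintD s2 i3) (RintD i1 i2).
by rewrite !RintZ.
Qed.

Lemma ReD (R : realType) (x y : R[i]) : complex.Re (x + y) = complex.Re x + complex.Re y.
Proof. by case: x; case: y. Qed.
Lemma ImD (R : realType) (x y : R[i]) : complex.Im (x + y) = complex.Im x + complex.Im y.
Proof. by case: x; case: y. Qed.
Lemma ReM (R : realType) (x y : R[i]) : complex.Re (x * y) = complex.Re x * complex.Re y - complex.Im x * complex.Im y.
Proof. by case: x; case: y. Qed.
Lemma ImM (R : realType) (x y : R[i]) : complex.Im (x * y) = complex.Re x * complex.Im y + complex.Im x * complex.Re y.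
Proof. by case: x; case: y. Qed.
Lemma ReJ (R : realType) (x : R[i]) : complex.Re (conjc x) = complex.Re x.
Proof. by case: x. Qed.
Lemma ImJ (R : realType) (x : R[i]) : complex.Im (conjc x) = - complex.Im x.
Proof. by case: x. Qed.
Lemma cplx_eq (R : realType) (x y : R[i]) : complex.Re x = complex.Re y -> complex.Im x = complex.Im y -> x = y.
Proof. by case: x; case: y => /= a b c d -> ->. Qed.

Definition good (R : realType) n (mu : {measure set (Rn R n) -> \bar R})
  (f : 'rV[R]_n -> R[i]) :=
  rint mu (fun x => complex.Re (f x)) /\ rint mu (fun x => complex.Im (f x)).
Arguments good {R n} mu f.

Lemma cint3 (R : realType) n (mu : {measure set (Rn R n) -> \bar R})
  (f g h : 'rV[R]_n -> R[i]) (c1 c2 c3 : R[i]) :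
  good mu f -> good mu g -> good mu h ->
  cint mu (fun x => c1 * f x + c2 * g x + c3 * conjc (h x)) =
  c1 * cint mu f + c2 * cint mu g + c3 * conjc (cint mu h).
Proof.
move=> [f1 f2] [g1 g2] [h1 h2].
apply: cplx_eq; rewrite ?ReD ?ImD ?ReM ?ImM ?ReJ ?ImJ /cint /=.
- transitivity (Rintegral mu (setT : set (Rn R n)) (fun x =>
     complex.Re c1 * complex.Re (f x) + (- complex.Im c1) * complex.Im (f x)
     + complex.Re c2 * complex.Re (g x) + (- complex.Im c2) * complex.Im (g x)
     + complex.Re c3 * complex.Re (h x) + complex.Im c3 * complex.Im (h x))).
    by apply: eq_Rintegral => x _; rewrite !ReD !ReM ReJ ImJ; ring.
  rewrite Rint6 //; ring.
- transitivity (Rintegral mu (setT : set (Rn R n)) (fun x =>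
     complex.Re c1 * complex.Im (f x) + complex.Im c1 * complex.Re (f x)
     + complex.Re c2 * complex.Im (g x) + complex.Im c2 * complex.Re (g x)
     + (- complex.Re c3) * complex.Im (h x) + complex.Im c3 * complex.Re (h x))).
    by apply: eq_Rintegral => x _; rewrite !ImD !ImM ReJ ImJ; ring.
  rewrite Rint6 //; ring.
Qed.

Lemma goodD (R : realType) n (mu : {measure set (Rn R n) -> \bar R}) (f g : 'rV[R]_n -> R[i]) :
  good mu f -> good mu g -> good mu (fun x => f x + g x).
Proof.
move=> [f1 f2] [g1 g2]; split.
  have -> : (fun x => complex.Re (f x + g x)) = (fun x => complex.Re (f x) + complex.Re (g x)).
    by apply/funext => x; rewrite ReD.
  exact: rintD.
have -> : (fun x => complex.Im (f x + g x)) = (fun x => complex.Im (f x) + complex.Im (g x)).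
  by apply/funext => x; rewrite ImD.
exact: rintD.
Qed.

Lemma goodZ (R : realType) n (mu : {measure set (Rn R n) -> \bar R}) (c : R[i]) (f : 'rV[R]_n -> R[i]) :
  good mu f -> good mu (fun x => c * f x).
Proof.
move=> [f1 f2]; split.
  have -> : (fun x => complex.Re (c * f x)) = (fun x => complex.Re c * complex.Re (f x) + (- complex.Im c) * complex.Im (f x)).
    by apply/funext => x; rewrite ReM; ring.
  by apply: rintD; apply: rintZ.
have -> : (fun x => complex.Im (c * f x)) = (fun x => complex.Re c * complex.Im (f x) + complex.Im c * complex.Re (f x)).
  by apply/funext => x; rewrite ImM; ring.
by apply: rintD; apply: rintZ.
Qed.

Lemma good0 (R : realType) n (mu : {measure set (Rn R n) -> \bar R}) :
  good mu (fun _ : 'rV[R]_n => 0).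
Proof. split; exact: rint0. Qed.

Lemma good_seq (R : realType) n (mu : {measure set (Rn R n) -> \bar R}) (I : Type)
  (F : I -> 'rV[R]_n -> R[i]) (s : seq I) :
  (forall i, good mu (F i)) -> good mu (fun x => \sum_(i <- s) F i x).
Proof.
move=> hF; elim: s => [|i s IH].
  have -> : (fun x => \sum_(i <- [::]) F i x) = (fun _ => 0).
    by apply/funext => x; rewrite big_nil.
  exact: good0.
have -> : (fun x => \sum_(j <- i :: s) F j x) = (fun x => F i x + \sum_(j <- s) F j x).
  by apply/funext => x; rewrite big_cons.
exact: goodD.
Qed.

Lemma good_sum (R : realType) n (mu : {measure set (Rn R n) -> \bar R}) N
  (F : 'I_N -> 'rV[R]_n -> R[i]) :
  (forall i, good mu (F i)) -> good mu (fun x => \sum_(i < N) F i x).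
Proof. exact: good_seq. Qed.

Lemma rint_prod (R : realType) n (mu : {measure set (Rn R n) -> \bar R}) (a b h : 'rV[R]_n -> R) :
  measurable_fun (setT : set (Rn R n)) (fun x : Rn R n => a x) ->
  measurable_fun (setT : set (Rn R n)) (fun x : Rn R n => b x) ->
  (forall x, a x ^+ 2 <= h x) -> (forall x, b x ^+ 2 <= h x) -> rint mu h ->
  rint mu (fun x => a x * b x).
Proof.
move=> ma mb ha hb hh.
apply: (@rint_le _ _ _ _ (fun x => 2 * h x)).
- exact: measurable_funM.
- move=> x; have := ha x; have := hb x; rewrite ler_norml => h1 h2.
  apply/andP; split; nra.
- exact: rintZ.
Qed.

Definition L2c (R : realType) n (h : 'rV[R]_n -> R) (f : 'rV[R]_n -> R[i]) :=
  [/\ measurable_fun (setT : set (Rn R n)) (fun x : Rn R n => complex.Re (f x)),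
      measurable_fun (setT : set (Rn R n)) (fun x : Rn R n => complex.Im (f x)) &
      forall x, complex.Re (f x) ^+ 2 + complex.Im (f x) ^+ 2 <= h x].
Arguments L2c {R n} h f.

Lemma goodM (R : realType) n (mu : {measure set (Rn R n) -> \bar R}) (h : 'rV[R]_n -> R)
  (f g : 'rV[R]_n -> R[i]) :
  L2c h f -> L2c h g -> rint mu h -> good mu (fun x => f x * g x).
Proof.
move=> [f1 f2 fb] [g1 g2 gb] hh.
have b1 : forall x, complex.Re (f x) ^+ 2 <= h x.
  by move=> x; have := fb x; have := sqr_ge0 (complex.Im (f x)); lra.
have b2 : forall x, complex.Im (f x) ^+ 2 <= h x.
  by move=> x; have := fb x; have := sqr_ge0 (complex.Re (f x)); lra.
have b3 : forall x, complex.Re (g x) ^+ 2 <= h x.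
  by move=> x; have := gb x; have := sqr_ge0 (complex.Im (g x)); lra.
have b4 : forall x, complex.Im (g x) ^+ 2 <= h x.
  by move=> x; have := gb x; have := sqr_ge0 (complex.Re (g x)); lra.
split.
  have -> : (fun x => complex.Re (f x * g x)) = (fun x => complex.Re (f x) * complex.Re (g x) + (-1) * (complex.Im (f x) * complex.Im (g x))).
    by apply/funext => x; rewrite ReM; ring.
  apply: rintD; last apply: rintZ; exact: rint_prod.
have -> : (fun x => complex.Im (f x * g x)) = (fun x => complex.Re (f x) * complex.Im (g x) + complex.Im (f x) * complex.Re (g x)).
  by apply/funext => x; rewrite ImM; ring.
apply: rintD; exact: rint_prod.
Qed.

Lemma L2cJ (R : realType) n (h : 'rV[R]_n -> R) (f : 'rV[R]_n -> R[i]) :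
  L2c h f -> L2c h (fun x => conjc (f x)).
Proof.
move=> [f1 f2 fb]; split.
- by have -> : (fun x : Rn R n => complex.Re (conjc (f x))) = (fun x => complex.Re (f x))
    by apply/funext => x; rewrite ReJ.
- have -> : (fun x : Rn R n => complex.Im (conjc (f x))) = \- (fun x => complex.Im (f x)).
    by apply/funext => x; rewrite ImJ.
  exact: measurable_funN.
- by move=> x; rewrite ReJ ImJ sqrrN.
Qed.

Lemma L2_comp (R : realType) n N (mu : {measure set (Rn R n) -> \bar R})
  (psi : 'rV[R]_n -> 'cV[R[i]]_N) :
  L2 mu psi -> rint mu (fun x => nsq (psi x)) /\
  forall k, L2c (fun x => nsq (psi x)) (fun x => psi x k 0).
Proof.
move=> [hm hi].
have hc : forall k, L2c (fun x => nsq (psi x)) (fun x => psi x k 0).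
  move=> k; have [m1 m2] := hm k; split => // x.
  rewrite /nsq (bigD1 k) //= lerDl; apply: sumr_ge0 => j _.
  by apply: addr_ge0; apply: sqr_ge0.
split => //.
apply/integrableP; split.
  apply/measurable_EFinP; rewrite /nsq.
  apply: measurable_sum => k; apply: measurable_funD.
    by apply: measurable_funX; case: (hm k).
  by apply: measurable_funX; case: (hm k).
apply: le_lt_trans hi; rewrite le_eqVlt; apply/orP; left; apply/eqP.
apply: eq_integral => x _; rewrite gee0_abs // lee_fin.
by apply: sumr_ge0 => j _; apply: addr_ge0; apply: sqr_ge0.
Qed.
Arguments L2_comp {R n N mu psi}.
Arguments goodM {R n mu h f g}.
Arguments L2cJ {R n h f}.
Arguments good_sum {R n mu N F}.
Arguments goodZ {R n mu} c {f}.
Arguments goodD {R n mu f g}.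
Arguments cint3 {R n mu f g h} c1 c2 c3.


Lemma qE (R : realType) N (u : 'cV[R[i]]_N) :
  (hadj u *m u) 0 0 = \sum_j conjc (u j 0) * u j 0.
Proof. by rewrite /hadj !mxE; apply: eq_bigr => j _; rewrite !mxE. Qed.

Lemma lE (R : realType) N (B : 'M[R[i]]_N) (u : 'cV[R[i]]_N) :
  (hadj u *m (B *m cconj u)) 0 0 =
  \sum_j \sum_k B j k * (conjc (u j 0) * conjc (u k 0)).
Proof.
rewrite /hadj mxE; apply: eq_bigr => j _; rewrite !mxE mulr_sumr.
by apply: eq_bigr => k _; rewrite !mxE; ring.
Qed.

Lemma two_re (R : realType) (z : R[i]) : 2 * Complex (complex.Re z) 0 = z + conjc z.
Proof. by rewrite addcJ. Qed.

Lemma conjcD (R : realType) (x y : R[i]) : conjc (x + y) = conjc x + conjc y.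
Proof. exact: rmorphD. Qed.
Lemma conjcX2 (R : realType) (x : R[i]) : conjc (x ^+ 2) = conjc x ^+ 2.
Proof. by rewrite !expr2 conjcM. Qed.
Lemma conjc2 (R : realType) : conjc (2 : R[i]) = 2.
Proof. have -> : (2 : R[i]) = 1 + 1 by []. by rewrite conjcD conjc1. Qed.

Lemma qJ (R : realType) N (u : 'cV[R[i]]_N) :
  conjc ((hadj u *m u) 0 0) = (hadj u *m u) 0 0.
Proof.
rewrite qE (big_morph _ (@conjcD R) (@conjc0 R)); apply: eq_bigr => j _.
by rewrite conjcM conjcK mulrC.
Qed.


Theorem lemma2p8 (R : realType) (n N : nat) (m : R)
    (alpha : 'I_n -> 'M[R[i]]_N) (beta B : 'M[R[i]]_N)
    (mu : {measure set (Rn R n) -> \bar R}) (a b : R[i])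
    (psi : 'rV[R]_n -> 'cV[R[i]]_N) :
  (1 <= n)%N -> (2 <= N)%N -> ~~ odd N -> 0 < m ->
  dirac_matrices alpha beta ->
  anticommutes_BK_Dirac B alpha beta m ->
  (forall v : 'cV[R[i]]_N, B *m cconj v = cconj (hadj B *m v)) ->
  hadj B *m B = 1%:M ->
  is_lebesgue_Rn mu ->
  `|a| ^+ 2 - `|b| ^+ 2 = 1 ->
  L2 mu psi ->
  let Q := Qf mu in
  let L := Lambdaf mu B in
  let g := gop a b B in
  [/\ Q (g psi) = (`|a| ^+ 2 + `|b| ^+ 2) * Q psi
                  + 2 * Complex (complex.Re (conjc a * b * L psi)) 0,
      L (g psi) = conjc a ^+ 2 * L psi + 2 * conjc a * conjc b * Q psi
                  + conjc b ^+ 2 * conjc (L psi) &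
      Q (g psi) ^+ 2 - `|L (g psi)| ^+ 2 = Q psi ^+ 2 - `|L psi| ^+ 2].
Proof.
move=> _ _ _ _ _ _ HBK HBB _ hab hpsi Q L g.
have [hr hc] := L2_comp hpsi.
pose q := fun x => (hadj (psi x) *m psi x) 0 0.
pose l := fun x => (hadj (psi x) *m (B *m cconj (psi x))) 0 0.
have gq : good mu q.
  have -> : q = (fun x => \sum_j conjc (psi x j 0) * psi x j 0).
    by apply/funext => x; rewrite /q qE.
  apply: good_sum => j; apply: goodM hr; [exact: L2cJ | exact: hc].
have gl : good mu l.
  have -> : l = (fun x => \sum_j \sum_k B j k * (conjc (psi x j 0) * conjc (psi x k 0))).
    by apply/funext => x; rewrite /l lE.
  apply: good_sum => j; apply: good_sum => k; apply: goodZ.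
  by apply: goodM hr; apply: L2cJ.
have QJ : conjc (Q psi) = Q psi.
  rewrite /Q /Qf /cint.
  have -> : Rintegral mu (setT : set (Rn R n))
      (fun x => complex.Im ((hadj (psi x) *m psi x) 0 0)) = 0.
    transitivity (Rintegral mu (setT : set (Rn R n)) (fun _ => 0 : R)).
      apply: eq_Rintegral => x _.
      have := @qJ R N (psi x); case: ((hadj (psi x) *m psi x) 0 0) => re im /= [].
      lra.
    by rewrite Rintegral_cst // mul0r.
  by rewrite /= oppr0.
have dens := fun x => @dens_Q R N B a b (psi x) (g psi x) (q x) (l x) HBK HBB
   erefl erefl erefl.
have E1 : Q (g psi) = (a * conjc a + b * conjc b) * Q psi + conjc a * b * L psi
    + conjc (conjc a * b) * conjc (L psi).
  transitivity (cint mu (fun x => (a * conjc a + b * conjc b) * q x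
     + conjc a * b * l x + conjc (conjc a * b) * conjc (l x))).
    rewrite /Q /Qf; congr cint; apply/funext => x.
    have [d1 _] := dens x. rewrite d1 (@conjcM R (conjc a * b)). reflexivity.
  exact: (cint3 _ _ _ gq gl gl).
have E2 : L (g psi) = conjc a ^+ 2 * L psi + 2 * conjc a * conjc b * Q psi
                  + conjc b ^+ 2 * conjc (L psi).
  transitivity (cint mu (fun x => conjc a ^+ 2 * l x + 2 * conjc a * conjc b * q x
                  + conjc b ^+ 2 * conjc (l x))).
    rewrite /L /Lambdaf; congr cint; apply/funext => x.
    by have [_ ->] := dens x.
  exact: (cint3 _ _ _ gl gq gl).
have hab' : a * conjc a - b * conjc b = 1 by rewrite -(sqr_normc a) -(sqr_normc b).
split; [ | exact: E2 | ].
  rewrite E1 two_re. rewrite (sqr_normc a) (sqr_normc b). rewrite !conjcM conjcK. ring.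
rewrite E1 E2 !sqr_normc. rewrite ?(conjcD, conjcM, conjcX2, conjc2, conjcK). rewrite ?QJ.
transitivity ((a * conjc a - b * conjc b) ^+ 2 * (Q psi ^+ 2 - L psi * conjc (L psi))).
  ring.
by rewrite hab' expr1n mul1r.
Qed.
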